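(* For an integer $n \ge 1$ and $p \in [0,1)$ let \[ \Lambda_n(p) := \log \rho \bigl( \mathrm{Bin}(n,p), \mathrm{Poiss}(np) \bigr) . \] Then $\Lambda_n$ is a continuous and strictly increasing function of $p \in [0,1)$ with $\Lambda_n(0) = 0$, and for $0 < p < 1$, \[ \Lambda_n(p) < - \log(1-p) \quad\text{and}\quad \Lambda_n(p) < - \tfrac{1}{2}\log\bigl(1 - \lceil np \rceil/n\bigr) . \] More precisely, with $k := \lceil np \rceil$, for $0<p<1$, \[ \Lambda_n(p) + \frac{\log(1-p)}{2} \ < \ - \frac{k-1}{12 n (n-k+1)} + \frac{1}{8(n-k) + 6} \] and \[ \Lambda_n(p) + \frac{\log(1-p)}{2} \ > \ - \frac{k-1}{12 n (n-k+1)} - \frac{1}{12 (n-k)(n-k+1)} . \]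
   Context: $\mathrm{Bin}(n,p)$ is the binomial and $\mathrm{Poiss}(\lambda)$ the Poisson distribution on $\{0,1,2,\ldots\}$. For probability measures $Q,P$ on $(\mathcal{X},\mathcal{A})$, $\rho(Q,P) := \sup_{A \in \mathcal{A}} Q(A)/P(A)$ with conventions $0/0 := 0$, $a/0 := \infty$ for $a>0$. In the lower bound, if $k = n$ the right-hand side is interpreted as $-\infty$ (the term $1/(12(n-k)(n-k+1))$ being $+\infty$). *)

(* Defs.v *)
From Stdlib Require Import Reals Lra ZArith.
From Coquelicot Require Import Coquelicot.
Open Scope R_scope.

Definition binom_pmf (n : nat) (p : R) (k : nat) : R :=
  if Nat.leb k n then Binomial.C n k * p ^ k * (1 - p) ^ (n - k) else 0.

(* Probability mass function of Poiss(lam) (with 0^0 = 1, so Poiss(0) = delta_0). *)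
Definition poiss_pmf (lam : R) (k : nat) : R :=
  exp (- lam) * lam ^ k / INR (fact k).

(* Subsets A of {0,1,2,...} (all subsets are measurable: power set),
   represented by their indicator A : nat -> bool. *)
Definition binom_prob (n : nat) (p : R) (A : nat -> bool) : R :=
  sum_f_R0 (fun k => if A k then binom_pmf n p k else 0) n.

Definition poiss_prob (lam : R) (A : nat -> bool) : R :=
  Series (fun k => if A k then poiss_pmf lam k else 0).

(* Q(A)/P(A) with conventions 0/0 := 0 and a/0 := +oo for a > 0. *)
Definition ratio (q p : R) : Rbar :=
  if Req_EM_T p 0 then (if Req_EM_T q 0 then Finite 0 else p_infty)
  else Finite (q / p).

Definition rho_bin_poiss (n : nat) (p : R) : Rbar :=
  Rbar_lub (fun r => exists A : nat -> bool,
              r = ratio (binom_prob n p A) (poiss_prob (INR n * p) A)).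

(* Lambda_n(p) = log rho(Bin(n,p), Poiss(np)) (rho is shown finite in the theorem). *)
Definition Lambda (n : nat) (p : R) : R := ln (real (rho_bin_poiss n p)).

Definition ceilR (x : R) : Z := (- Int_part (- x))%Z.

(* Main.v *)
Require Import Defs.
From Stdlib Require Import Reals ZArith Lra Lia Psatz Factorial.
From Coquelicot Require Import Coquelicot.
Open Scope R_scope.

Lemma ln_lt_sub1 x : 0 < x -> x <> 1 -> ln x < x - 1.
Proof.
  intros Hx H1. assert (ln x <> 0).
  { intro E. apply H1. rewrite <- (exp_ln x Hx), E. apply exp_0. }
  pose proof (exp_ineq1 _ H). rewrite exp_ln in H0 by lra. lra.
Qed.

Lemma ln_le_sub1 x : 0 < x -> ln x <= x - 1.
Proof.
  intros Hx. destruct (Req_dec x 1) as [->|H]. rewrite ln_1; lra.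
  left; now apply ln_lt_sub1.
Qed.

Lemma incr_strict (f df : R -> R) b : 0 < b ->
  (forall x, 0 <= x <= b -> is_derive f x (df x)) ->
  (forall x, 0 < x < b -> 0 < df x) -> f 0 < f b.
Proof.
  intros Hb Hd Hp.
  destruct (MVT_cor2 f df 0 b Hb) as [c [Hc1 Hc2]].
  { intros c Hc. apply is_derive_Reals. now apply Hd. }
  pose proof (Hp c Hc2). nra.
Qed.

Lemma incr_weak (f df : R -> R) b : 0 <= b ->
  (forall x, 0 <= x <= b -> is_derive f x (df x)) ->
  (forall x, 0 < x < b -> 0 <= df x) -> f 0 <= f b.
Proof.
  intros Hb Hd Hp. destruct (Req_dec b 0) as [->|Hb0]. lra.
  destruct (MVT_cor2 f df 0 b) as [c [Hc1 Hc2]]. lra.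
  { intros c Hc. apply is_derive_Reals. now apply Hd. }
  pose proof (Hp c Hc2). nra.
Qed.

Lemma L1 z : 0 <= z < 1 ->
  2*z + 2*z^3/3 + 2*z^5/5 <= ln (1+z) - ln (1-z).
Proof.
  intros Hz.
  pose (f := fun z => ln (1+z) - ln (1-z) - (2*z + 2*z^3/3 + 2*z^5/5)).
  assert (f 0 <= f z).
  { apply (incr_weak f (fun z => 2 * z^6 / (1 - z^2))). lra.
    - intros x Hx. unfold f. auto_derive. repeat split; lra. field. repeat split; try lra; nra.
    - intros x Hx. apply Rmult_le_pos. pose proof (pow_le x 6). lra.
      apply Rlt_le, Rinv_0_lt_compat. nra. }
  unfold f in H. rewrite Rplus_0_r, Rminus_0_r, ln_1 in H. lra.
Qed.

Lemma U1 z : 0 < z < 1 ->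
  ln (1+z) - ln (1-z) < 2*z + 2/3*z^3/(1-z^2).
Proof.
  intros Hz.
  pose (f := fun z => 2*z + 2/3*z^3/(1-z^2) - (ln (1+z) - ln (1-z))).
  assert (f 0 < f z).
  { apply (incr_strict f (fun z => 4/3 * z^4 / (1 - z^2)^2)). lra.
    - intros x Hx. unfold f. auto_derive. repeat split; try lra; nra.
      field. split; try lra; nra.
    - intros x Hx. apply Rdiv_lt_0_compat. pose proof (pow_lt x 4). lra.
      apply pow_lt. nra. }
  unfold f in H. rewrite Rplus_0_r, Rminus_0_r, ln_1 in H.
  replace (2 * 0 + 2 / 3 * 0 ^ 3 / (1 - 0 ^ 2) - (0 - 0)) with 0 in H by field. lra.
Qed.

Lemma L2 y : 0 <= y -> y - y^2/2 + y^3/3 - y^4/4 <= ln (1+y).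
Proof.
  intros Hy.
  pose (f := fun y => ln (1+y) - (y - y^2/2 + y^3/3 - y^4/4)).
  assert (f 0 <= f y).
  { apply (incr_weak f (fun y => y^4/(1+y))). lra.
    - intros x Hx. unfold f. auto_derive. repeat split; lra. field. repeat split; try lra; nra.
    - intros x Hx. apply Rmult_le_pos. pose proof (pow_le x 4). lra.
      apply Rlt_le, Rinv_0_lt_compat. lra. }
  unfold f in H. rewrite Rplus_0_r, ln_1 in H. lra.
Qed.

Definition dd (j : nat) : R := (INR j + /2) * (ln (INR j + 1) - ln (INR j)) - 1.

Lemma dd_phi (j : nat) : (0 < j)%nat ->
  let z := / (2 * INR j + 1) in
  ln (INR j + 1) - ln (INR j) = ln (1 + z) - ln (1 - z).
Proof.
  intros Hj z. assert (HJ : 0 < INR j) by (apply lt_0_INR; lia).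
  assert (E1 : 1 + z = 2 * (INR j + 1) / (2 * INR j + 1)) by (unfold z; field; lra).
  assert (E2 : 1 - z = 2 * INR j / (2 * INR j + 1)) by (unfold z; field; lra).
  rewrite E1, E2, !ln_div by lra. rewrite !ln_mult by lra. ring.
Qed.

Lemma dd_lower j : (0 < j)%nat ->
  let z := / (2 * INR j + 1) in z^2/3 + z^4/5 <= dd j.
Proof.
  intros Hj z. assert (HJ : 0 < INR j) by (apply lt_0_INR; lia).
  unfold dd. rewrite dd_phi by lia. fold z.
  assert (Hz : 0 < z < 1). { unfold z. split. apply Rinv_0_lt_compat; lra.
    rewrite <- Rinv_1. apply Rinv_lt_contravar; lra. }
  pose proof (L1 z ltac:(lra)).
  assert (E : INR j + /2 = / (2 * z)) by (unfold z; field; lra).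
  rewrite E.
  apply Rle_trans with (/ (2*z) * (2 * z + 2 * z ^ 3 / 3 + 2 * z ^ 5 / 5) - 1).
  right. field. lra.
  apply Rplus_le_compat_r. apply Rmult_le_compat_l. left; apply Rinv_0_lt_compat; lra. lra.
Qed.

Lemma dd_upper j : (0 < j)%nat -> dd j < / (12 * INR j * (INR j + 1)).
Proof.
  intros Hj. assert (HJ : 0 < INR j) by (apply lt_0_INR; lia).
  unfold dd. rewrite dd_phi by lia. set (z := / (2 * INR j + 1)).
  assert (Hz : 0 < z < 1). { unfold z. split. apply Rinv_0_lt_compat; lra.
    rewrite <- Rinv_1. apply Rinv_lt_contravar; lra. }
  pose proof (U1 z Hz).
  assert (E : INR j + /2 = / (2 * z)) by (unfold z; field; lra).
  rewrite E.
  apply Rlt_le_trans with (/ (2*z) * (2*z + 2/3*z^3/(1-z^2)) - 1).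
  apply Rplus_lt_compat_r. apply Rmult_lt_compat_l. apply Rinv_0_lt_compat; lra. lra.
  right. unfold z. field. repeat split; try lra. nra.
Qed.

Lemma dd_pos j : (0 < j)%nat -> 0 < dd j.
Proof.
  intros Hj. pose proof (dd_lower j Hj). simpl in H.
  assert (0 < / (2 * INR j + 1)). { apply Rinv_0_lt_compat. pose proof (pos_INR j). lra. }
  nra.
Qed.

Lemma R1 x : 0 < x ->
  let z := / (2 * x + 1) in
  / (12 * x * (x + 1)) - (/ (320 * x^3) - / (320 * (x+1)^3)) <= z^2/3 + z^4/5.
Proof.
  intros Hx z. unfold z.
  assert (E : (/ (2 * x + 1)) ^ 2 / 3 + (/ (2 * x + 1)) ^ 4 / 5 -
     (/ (12 * x * (x + 1)) - (/ (320 * x ^ 3) - / (320 * (x + 1) ^ 3)))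
     = (3 + 33*x + 73*x^2 + 96*x^3 + 88*x^4 + 48*x^5 + 16*x^6)
        / (960 * (2*x+1)^4 * x^3 * (x+1)^3)).
  { field. lra. }
  assert (0 <= (3 + 33*x + 73*x^2 + 96*x^3 + 88*x^4 + 48*x^5 + 16*x^6)
        / (960 * (2*x+1)^4 * x^3 * (x+1)^3)).
  { apply Rlt_le, Rdiv_lt_0_compat.
    pose proof (pow_lt x 2 Hx); pose proof (pow_lt x 3 Hx); pose proof (pow_lt x 4 Hx);
    pose proof (pow_lt x 5 Hx); pose proof (pow_lt x 6 Hx). lra.
    repeat apply Rmult_lt_0_compat; try lra; apply pow_lt; lra. }
  lra.
Qed.

Fixpoint Ssum (j t : nat) : R :=
  match t with O => 0 | S t' => dd j + Ssum (S j) t' end.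

Lemma Ssum_nonneg j t : (0 < j)%nat -> 0 <= Ssum j t.
Proof.
  revert j; induction t; intros j Hj; simpl. lra.
  pose proof (dd_pos j Hj). pose proof (IHt (S j) ltac:(lia)). lra.
Qed.

Lemma Ssum_upper j t : (0 < j)%nat -> (0 < t)%nat ->
  Ssum j t < / (12 * INR j) - / (12 * INR (j + t)).
Proof.
  revert j; induction t; intros j Hj Ht. lia.
  simpl Ssum. pose proof (dd_upper j Hj).
  assert (HJ : 0 < INR j) by (apply lt_0_INR; lia).
  assert (E : / (12 * INR j * (INR j + 1)) = / (12 * INR j) - / (12 * INR (S j)))
    by (rewrite S_INR; field; repeat split; lra).
  destruct t.
  - simpl. rewrite Nat.add_1_r. lra.
  - pose proof (IHt (S j) ltac:(lia) ltac:(lia)).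
    replace (S j + S t)%nat with (j + S (S t))%nat in H0 by lia. lra.
Qed.

Lemma Ssum_lower j t : (0 < j)%nat ->
  / (12 * INR j) - / (12 * INR (j + t)) - (/ (320 * INR j ^ 3) - / (320 * INR (j+t) ^ 3))
    <= Ssum j t.
Proof.
  revert j; induction t; intros j Hj; simpl Ssum.
  - rewrite Nat.add_0_r. lra.
  - assert (HJ : 0 < INR j) by (apply lt_0_INR; lia).
    pose proof (dd_lower j Hj). pose proof (R1 (INR j) HJ). cbv zeta in H, H0.
    pose proof (IHt (S j) ltac:(lia)).
    replace (S j + t)%nat with (j + S t)%nat in H1 by lia.
    rewrite S_INR in H1.
    assert (E : / (12 * INR j * (INR j + 1)) = / (12 * INR j) - / (12 * (INR j + 1)))
      by (field; repeat split; lra). lra.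
Qed.

Definition Am (n j : nat) : R := INR (fact n) / (INR (fact j) * INR n ^ (n - j)).

Lemma Am_pos n j : (0 < n)%nat -> 0 < Am n j.
Proof.
  intros Hn. unfold Am. apply Rdiv_lt_0_compat. apply lt_0_INR, lt_O_fact.
  apply Rmult_lt_0_compat. apply lt_0_INR, lt_O_fact. apply pow_lt, lt_0_INR; lia.
Qed.

Lemma Am_step n j : (S j <= n)%nat -> Am n j = Am n (S j) * (INR j + 1) / INR n.
Proof.
  intros H. unfold Am. replace (n - j)%nat with (S (n - S j)) by lia.
  change (fact (S j)) with (S j * fact j)%nat. rewrite mult_INR, S_INR. simpl pow.
  assert (0 < INR n) by (apply lt_0_INR; lia).
  pose proof (INR_fact_neq_0 j). pose proof (pow_lt (INR n) (n - S j) H0).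
  field. repeat split; try lra. pose proof (pos_INR j); lra.
Qed.

Definition TT (n j : nat) : R :=
  ln (Am n j) + INR (n - j) + (INR j + /2) * (ln (INR j) - ln (INR n)).

Lemma TT_eq n t : forall j, (1 <= j)%nat -> (j + t = n)%nat -> TT n j = - Ssum j t.
Proof.
  induction t; intros j Hj Hjt.
  - rewrite Nat.add_0_r in Hjt. subst j. unfold TT, Am. simpl Ssum.
    rewrite Nat.sub_diag. simpl pow. rewrite Rmult_1_r.
    replace (INR (fact n) / INR (fact n)) with 1 by (field; apply INR_fact_neq_0).
    rewrite ln_1. simpl INR. ring.
  - simpl Ssum. pose proof (IHt (S j) ltac:(lia) ltac:(lia)) as IH. rewrite Ropp_plus_distr, <- IH.
    assert (Hn : (0 < n)%nat) by lia.
    assert (HJ : 0 < INR j) by (apply lt_0_INR; lia).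
    assert (HN : 0 < INR n) by (apply lt_0_INR; lia).
    unfold TT. rewrite (Am_step n j) by lia.
    pose proof (Am_pos n (S j) Hn).
    unfold Rdiv. rewrite ln_mult, ln_mult, ln_Rinv; try lra.
    2: { apply Rmult_lt_0_compat; lra. }
    2: { apply Rinv_0_lt_compat; lra. }
    replace (n - j)%nat with (S (n - S j)) by lia. rewrite S_INR, (S_INR j).
    unfold dd. ring.
Qed.

Definition gk (n k : nat) (x : R) : R :=
  INR (fact n) / (INR (fact (n - k)) * INR n ^ k) * exp (INR n * x) * (1 - x) ^ (n - k).

Lemma gk_pos n k x : (0 < n)%nat -> x < 1 -> 0 < gk n k x.
Proof.
  intros Hn Hx. unfold gk. apply Rmult_lt_0_compat. apply Rmult_lt_0_compat.
  apply Rdiv_lt_0_compat. apply lt_0_INR, lt_O_fact.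
  apply Rmult_lt_0_compat. apply lt_0_INR, lt_O_fact. apply pow_lt, lt_0_INR; lia.
  apply exp_pos. apply pow_lt; lra.
Qed.

Lemma gk_Am n k x : (k <= n)%nat -> gk n k x = Am n (n - k) * exp (INR n * x) * (1 - x) ^ (n - k).
Proof. intros H. unfold gk, Am. replace (n - (n - k))%nat with k by lia. reflexivity. Qed.

Lemma gk_step n k x : (k < n)%nat -> x < 1 ->
  gk n (S k) x = gk n k x * INR (n - k) / (INR n * (1 - x)).
Proof.
  intros H Hx. unfold gk. replace (n - k)%nat with (S (n - S k)) by lia.
  change (fact (S (n - S k))) with (S (n - S k) * fact (n - S k))%nat.
  rewrite mult_INR. simpl pow.
  assert (0 < INR n) by (apply lt_0_INR; lia).
  pose proof (INR_fact_neq_0 (n - S k)). pose proof (pow_lt (INR n) k H0).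
  rewrite S_INR. pose proof (pos_INR (n - S k)).
  field. repeat split; lra.
Qed.

Lemma binom_eq n p k : (0 < n)%nat -> (k <= n)%nat -> p < 1 ->
  binom_pmf n p k = gk n k p * poiss_pmf (INR n * p) k.
Proof.
  intros Hn Hk Hp. unfold binom_pmf, poiss_pmf, gk, Binomial.C.
  replace (Nat.leb k n) with true by (symmetry; apply Nat.leb_le; lia).
  assert (0 < INR n) by (apply lt_0_INR; lia).
  pose proof (INR_fact_neq_0 (n - k)). pose proof (INR_fact_neq_0 k).
  pose proof (pow_lt (INR n) k H).
  rewrite Rpow_mult_distr.
  assert (exp (INR n * p) * exp (- (INR n * p)) = 1).
  { rewrite <- exp_plus. replace (INR n * p + - (INR n * p)) with 0 by ring. apply exp_0. }
  field_simplify; try (repeat split; lra).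
  rewrite <- (Rmult_1_r (INR (fact n) * p ^ k * (1 - p) ^ (n - k))) at 1.
  rewrite <- H3. field. repeat split; lra.
Qed.

Lemma gk_up n j x : (0 < n)%nat -> (j < n)%nat -> 0 <= x < 1 -> INR j <= INR n * x ->
  gk n j x <= gk n (S j) x.
Proof.
  intros Hn Hj Hx Hjx. rewrite gk_step by (lia || lra).
  pose proof (gk_pos n j x Hn ltac:(lra)).
  assert (0 < INR n) by (apply lt_0_INR; lia).
  rewrite minus_INR by lia.
  assert (INR n * (1 - x) <= INR n - INR j) by lra.
  assert (0 < INR n * (1 - x)) by (apply Rmult_lt_0_compat; lra).
  unfold Rdiv. rewrite Rmult_assoc.
  rewrite <- (Rmult_1_r (gk n j x)) at 1. apply Rmult_le_compat_l. lra.
  apply (Rmult_le_reg_r (INR n * (1 - x))). lra.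
  rewrite Rmult_assoc, Rinv_l by lra. lra.
Qed.

Lemma gk_down n j x : (0 < n)%nat -> (j < n)%nat -> 0 <= x < 1 -> INR n * x <= INR j ->
  gk n (S j) x <= gk n j x.
Proof.
  intros Hn Hj Hx Hjx. rewrite gk_step by (lia || lra).
  pose proof (gk_pos n j x Hn ltac:(lra)).
  assert (0 < INR n) by (apply lt_0_INR; lia).
  rewrite minus_INR by lia.
  assert (INR n - INR j <= INR n * (1 - x)) by lra.
  assert (0 < INR n * (1 - x)) by (apply Rmult_lt_0_compat; lra).
  unfold Rdiv. rewrite Rmult_assoc.
  rewrite <- (Rmult_1_r (gk n j x)) at 2. apply Rmult_le_compat_l. lra.
  apply (Rmult_le_reg_r (INR n * (1 - x))). lra.
  rewrite Rmult_assoc, Rinv_l by lra. lra.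
Qed.

Lemma gk_max n k x : (0 < n)%nat -> (1 <= k <= n)%nat -> 0 <= x < 1 ->
  INR k - 1 <= INR n * x <= INR k ->
  forall j, (j <= n)%nat -> gk n j x <= gk n k x.
Proof.
  intros Hn Hk Hx Hkx j Hj.
  destruct (Nat.le_gt_cases j k) as [Hjk|Hjk].
  - assert (forall d j, (j + d = k)%nat -> gk n j x <= gk n k x).
    { induction d; intros j' E. rewrite Nat.add_0_r in E; subst; lra.
      apply Rle_trans with (gk n (S j') x). apply gk_up; try lia; try lra.
      assert (INR j' <= INR k - 1). { rewrite <- E. rewrite plus_INR, S_INR. pose proof (pos_INR d). lra. }
      lra. apply IHd. lia. }
    apply (H (k - j)%nat). lia.
  - assert (forall d j, (k + d = j)%nat -> (j <= n)%nat -> gk n j x <= gk n k x).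
    { induction d; intros j' E Hj'. rewrite Nat.add_0_r in E; subst; lra.
      destruct j' as [|j']. lia.
      apply Rle_trans with (gk n j' x). apply gk_down; try lia; try lra.
      assert (INR k <= INR j') by (apply le_INR; lia). lra.
      apply IHd; lia. }
    apply (H (j - k)%nat). lia. lia.
Qed.

Lemma exists_interval n x : (0 < n)%nat -> 0 <= x < 1 ->
  exists k, (1 <= k <= n)%nat /\ INR k - 1 <= INR n * x <= INR k.
Proof.
  intros Hn Hx.
  assert (forall j, (1 <= j)%nat -> INR n * x <= INR j ->
     exists k, (1 <= k <= j)%nat /\ INR k - 1 <= INR n * x <= INR k).
  { induction j; intros Hj Hjx. lia.
    destruct (Nat.eq_dec j 0) as [->|Hj0].
    - exists 1%nat. split. lia. simpl. split. assert (0 <= INR n * x) by (apply Rmult_le_pos; [apply pos_INR|lra]). lra. simpl in Hjx; lra.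
    - destruct (Rle_dec (INR n * x) (INR j)).
      + destruct (IHj ltac:(lia) r) as [k [Hk1 Hk2]]. exists k. split. lia. exact Hk2.
      + exists (S j). split. lia. rewrite S_INR. rewrite S_INR in Hjx. lra. }
  destruct (H n ltac:(lia)) as [k Hk]. 
  assert (0 < INR n) by (apply lt_0_INR; lia). nra.
  exists k. exact Hk.
Qed.

Fixpoint Mx (n j : nat) (x : R) : R :=
  match j with O => gk n 0 x | S j' => Rmax (Mx n j' x) (gk n (S j') x) end.

Lemma Mx_ge n j x : forall i, (i <= j)%nat -> gk n i x <= Mx n j x.
Proof.
  induction j; intros i Hi; simpl.
  - replace i with 0%nat by lia. lra.
  - destruct (Nat.eq_dec i (S j)) as [->|Hne]. apply Rmax_r.
    eapply Rle_trans. apply IHj. lia. apply Rmax_l.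
Qed.

Lemma Mx_attained n j x : exists i, (i <= j)%nat /\ Mx n j x = gk n i x.
Proof.
  induction j; simpl. exists 0%nat. split; auto.
  destruct IHj as [i [Hi E]]. unfold Rmax. destruct (Rle_dec (Mx n j x) (gk n (S j) x)).
  exists (S j); split; auto. exists i; split; auto.
Qed.

Lemma Rmax_formula a b : Rmax a b = (a + b + Rabs (a - b)) / 2.
Proof.
  unfold Rmax. destruct (Rle_dec a b). rewrite Rabs_left1 by lra. field.
  rewrite Rabs_right by lra. field.
Qed.

Lemma gk_cont n k x : continuous (gk n k) x.
Proof.
  apply (@ex_derive_continuous R_AbsRing R_NormedModule). unfold gk. auto_derive. auto.
Qed.

Lemma Mx_cont n j x : continuous (Mx n j) x.
Proof.
  induction j; simpl. apply gk_cont.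
  apply continuous_ext with
    (fun y => mult (plus (plus (Mx n j y) (gk n (S j) y)) (Rabs (minus (Mx n j y) (gk n (S j) y)))) (/2)).
  intros y. rewrite Rmax_formula. unfold mult, plus, minus, opp; simpl. unfold Rdiv. reflexivity.
  apply (@continuous_mult R_UniformSpace R_AbsRing).
  apply (@continuous_plus R_UniformSpace R_AbsRing R_NormedModule).
  apply (@continuous_plus R_UniformSpace R_AbsRing R_NormedModule). exact IHj. apply gk_cont.
  apply continuous_Rabs_comp. apply (@continuous_minus R_UniformSpace R_AbsRing R_NormedModule). exact IHj. apply gk_cont.
  apply continuous_const.
Qed.

Definition M (n : nat) (x : R) : R := Mx n n x.

Lemma M_interval n k x : (0 < n)%nat -> (1 <= k <= n)%nat -> 0 <= x < 1 ->
  INR k - 1 <= INR n * x <= INR k -> M n x = gk n k x.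
Proof.
  intros. unfold M. destruct (Mx_attained n n x) as [i [Hi E]].
  apply Rle_antisym. rewrite E. apply (gk_max n k x); auto.
  apply Mx_ge. lia.
Qed.

Lemma M_pos n x : (0 < n)%nat -> x < 1 -> 0 < M n x.
Proof.
  intros. eapply Rlt_le_trans. apply (gk_pos n 0 x); auto. apply Mx_ge. lia.
Qed.

Lemma Series_zero : Series (fun _ => 0) = 0.
Proof.
  rewrite (Series_ext (fun _ => 0) (fun k => 0 * 0)) by (intros; ring).
  rewrite Series_scal_l. ring.
Qed.

Lemma poiss_nonneg l k : 0 <= l -> 0 <= poiss_pmf l k.
Proof.
  intros. unfold poiss_pmf. apply Rmult_le_pos. apply Rmult_le_pos.
  left; apply exp_pos. apply pow_le; auto. left; apply Rinv_0_lt_compat, lt_0_INR, lt_O_fact.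
Qed.

Lemma poiss_ex_series l (A : nat -> bool) : 0 <= l ->
  ex_series (fun k => if A k then poiss_pmf l k else 0).
Proof.
  intros Hl.
  assert (ex_series (poiss_pmf l)).
  { pose proof (is_exp_Reals l) as H. unfold is_pseries in H.
    assert (ex_series (fun k => scal (exp (- l)) (scal (pow_n l k) (/ INR (fact k))))).
    { apply (@ex_series_scal R_AbsRing R_NormedModule). eexists; exact H. }
    eapply ex_series_ext; [|exact H0]. intros k. unfold poiss_pmf. rewrite pow_n_pow.
    change (exp (- l) * (l ^ k * / INR (fact k)) = exp (- l) * l ^ k / INR (fact k)).
    unfold Rdiv. ring. }
  eapply (@ex_series_le R_AbsRing R_CompleteNormedModule _ (poiss_pmf l)); [|exact H].
  intros k. change (norm (if A k then poiss_pmf l k else 0)) with (Rabs (if A k then poiss_pmf l k else 0)).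
  pose proof (poiss_nonneg l k Hl).
  destruct (A k). rewrite Rabs_right; lra. rewrite Rabs_R0; lra.
Qed.

Lemma poiss_prob_ge l (A : nat -> bool) N : 0 <= l ->
  sum_f_R0 (fun k => if A k then poiss_pmf l k else 0) N <= poiss_prob l A.
Proof.
  intros Hl. unfold poiss_prob.
  rewrite (Series_incr_n (fun k => if A k then poiss_pmf l k else 0) (S N)) by (lia || now apply poiss_ex_series).
  simpl Nat.pred.
  assert (0 <= Series (fun k => if A (S N + k)%nat then poiss_pmf l (S N + k)%nat else 0)).
  { apply Rle_trans with (Series (fun _ => 0)). rewrite Series_zero; lra. apply Series_le.
    intros k. split. lra. destruct (A _). apply poiss_nonneg; auto. lra.
    apply (ex_series_incr_n (fun k => if A k then poiss_pmf l k else 0) (S N)).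
    now apply poiss_ex_series. }
  lra.
Qed.

Lemma sum_indic (f : nat -> R) i N :
  sum_f_R0 (fun k => if Nat.eqb k i then f k else 0) N = if Nat.leb i N then f i else 0.
Proof.
  induction N.
  - simpl. destruct i; simpl; reflexivity.
  - rewrite tech5, IHN. destruct (Nat.eqb_spec (S N) i) as [<-|Hne].
    + destruct (Nat.leb_spec (S N) N). lia. destruct (Nat.leb_spec (S N) (S N)). ring. lia.
    + destruct (Nat.leb_spec i N); destruct (Nat.leb_spec i (S N)); try lia; ring.
Qed.

Lemma poiss_single l i : 0 <= l ->
  poiss_prob l (fun k => Nat.eqb k i) = poiss_pmf l i.
Proof.
  intros Hl. unfold poiss_prob.
  rewrite (Series_incr_n (fun k => if Nat.eqb k i then poiss_pmf l k else 0) (S i)) by (lia || now apply poiss_ex_series).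
  simpl Nat.pred. rewrite sum_indic.
  replace (Nat.leb i i) with true by (symmetry; apply Nat.leb_le; lia).
  rewrite (Series_ext _ (fun _ => 0)). rewrite Series_zero. ring.
  intros k. replace (Nat.eqb (S i + k) i) with false by (symmetry; apply Nat.eqb_neq; lia).
  reflexivity.
Qed.

Lemma binom_single n p i : (i <= n)%nat ->
  binom_prob n p (fun k => Nat.eqb k i) = binom_pmf n p i.
Proof.
  intros. unfold binom_prob. rewrite sum_indic.
  replace (Nat.leb i n) with true by (symmetry; apply Nat.leb_le; lia). reflexivity.
Qed.

Lemma binom_pmf_nonneg n p k : 0 <= p <= 1 -> 0 <= binom_pmf n p k.
Proof.
  intros. unfold binom_pmf, Binomial.C. destruct (Nat.leb k n); [|lra].
  apply Rmult_le_pos. apply Rmult_le_pos.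
  apply Rmult_le_pos. apply pos_INR. left; apply Rinv_0_lt_compat, Rmult_lt_0_compat; apply lt_0_INR, lt_O_fact.
  apply pow_le; lra. apply pow_le; lra.
Qed.

Lemma rho_eq n p : (0 < n)%nat -> 0 <= p < 1 -> rho_bin_poiss n p = Finite (M n p).
Proof.
  intros Hn Hp. unfold rho_bin_poiss. apply Rbar_is_lub_unique.
  assert (Hl : 0 <= INR n * p) by (apply Rmult_le_pos; [apply pos_INR|lra]).
  pose proof (M_pos n p Hn ltac:(lra)) as HM.
  assert (Hb : forall A, binom_prob n p A <= M n p * poiss_prob (INR n * p) A).
  { intros A. unfold binom_prob.
    apply Rle_trans with (M n p * sum_f_R0 (fun k => if A k then poiss_pmf (INR n * p) k else 0) n).
    - rewrite scal_sum. apply sum_Rle. intros k Hk. destruct (A k); [|lra].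
      rewrite binom_eq by (lia || lra). rewrite Rmult_comm. apply Rmult_le_compat_l.
      apply poiss_nonneg; auto. unfold M. apply Mx_ge. lia.
    - apply Rmult_le_compat_l. lra. apply poiss_prob_ge; auto. }
  assert (Hbp : forall A, 0 <= binom_prob n p A).
  { intros A. unfold binom_prob. apply cond_pos_sum. intros k. destruct (A k). apply binom_pmf_nonneg; lra. lra. }
  assert (Hpp : forall A, 0 <= poiss_prob (INR n * p) A).
  { intros A. eapply Rle_trans; [|apply (poiss_prob_ge _ A 0%nat); auto].
    simpl. destruct (A 0%nat). apply poiss_nonneg; auto. lra. }
  assert (Hatt : exists A, Finite (M n p) = ratio (binom_prob n p A) (poiss_prob (INR n * p) A)).
  { destruct (Mx_attained n n p) as [i [Hi Ei]].
    assert (exists i, (i <= n)%nat /\ M n p = gk n i p /\ 0 < poiss_pmf (INR n * p) i) as [j [Hj [Ej Pj]]].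
    { destruct (Rle_lt_or_eq_dec 0 p (proj1 Hp)) as [Hp0|Hp0].
      - exists i. split; auto. split; auto. unfold poiss_pmf.
        apply Rmult_lt_0_compat. apply Rmult_lt_0_compat. apply exp_pos. apply pow_lt.
        apply Rmult_lt_0_compat; [apply lt_0_INR; lia|lra].
        apply Rinv_0_lt_compat, lt_0_INR, lt_O_fact.
      - subst p. exists 0%nat. split. lia. split.
        + rewrite (M_interval n 1) by (simpl; lia || lra).
          rewrite (gk_step n 0) by (lia || lra). rewrite Nat.sub_0_r. field.
          apply not_0_INR; lia.
        + unfold poiss_pmf. simpl. rewrite Rmult_0_r, Ropp_0, exp_0. lra. }
    exists (fun k => Nat.eqb k j). rewrite binom_single by auto. rewrite poiss_single by auto.
    unfold ratio. destruct (Req_EM_T (poiss_pmf (INR n * p) j) 0). lra.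
    rewrite binom_eq by (lia || lra). f_equal. rewrite Ej. field. lra. }
  split.
  - intros r [A ->]. unfold ratio.
    destruct (Req_EM_T (poiss_prob (INR n * p) A) 0) as [E|E].
    + destruct (Req_EM_T (binom_prob n p A) 0). simpl. lra.
      exfalso. pose proof (Hb A). pose proof (Hbp A). rewrite E in H. lra.
    + simpl. pose proof (Hpp A). apply Rle_div_l. lra. pose proof (Hb A). lra.
  - intros b Hub. destruct Hatt as [A HA]. apply Hub. exists A. exact HA.
Qed.

Lemma R2 m : 1 <= m ->
  let y := / (2 * m + 1) in
  / 2 - (m + / 2) * (y - y^2/2 + y^3/3 - y^4/4) + / (320 * (m+1)^3) < / (8 * m + 6).
Proof.
  intros Hm y. unfold y.
  set (t := 2 * m - 2).
  assert (Ht : 0 <= t) by (unfold t; lra).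
  assert (E : / (8 * m + 6) - (/ 2 - (m + / 2) * (/ (2 * m + 1) - (/ (2 * m + 1))^2/2
     + (/ (2 * m + 1))^3/3 - (/ (2 * m + 1))^4/4) + / (320 * (m+1)^3))
     = (18504 + 37048 * t + 25832 * t^2 + 8400 * t^3 + 1312 * t^4 + 80 * t^5)
       / (960 * (2*m+1)^3 * (2*(2*m+1)+1) * (2*m+2)^3)).
  { unfold t. field. lra. }
  assert (0 < (18504 + 37048 * t + 25832 * t^2 + 8400 * t^3 + 1312 * t^4 + 80 * t^5)
       / (960 * (2*m+1)^3 * (2*(2*m+1)+1) * (2*m+2)^3)).
  { apply Rdiv_lt_0_compat.
    pose proof (pow_le t 2 Ht); pose proof (pow_le t 3 Ht); pose proof (pow_le t 4 Ht);
    pose proof (pow_le t 5 Ht). lra.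
    repeat apply Rmult_lt_0_compat; try lra; apply pow_lt; lra. }
  lra.
Qed.

Lemma ln2_bound : 2/3 + 1/160 < ln 2.
Proof.
  pose proof (L1 (/3) ltac:(lra)).
  replace (ln (1 + / 3) - ln (1 - / 3)) with (ln 2) in H.
  2: { rewrite <- ln_div by lra. f_equal. field. }
  lra.
Qed.

Lemma Lambda_eq n p : (0 < n)%nat -> 0 <= p < 1 -> Lambda n p = ln (M n p).
Proof. intros. unfold Lambda. rewrite rho_eq by auto. reflexivity. Qed.

Lemma ln_gk n k x : (0 < n)%nat -> (k <= n)%nat -> x < 1 ->
  ln (gk n k x) = ln (Am n (n - k)) + INR n * x + INR (n - k) * ln (1 - x).
Proof.
  intros Hn Hk Hx. rewrite gk_Am by auto. pose proof (Am_pos n (n-k) Hn).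
  pose proof (exp_pos (INR n * x)). assert (0 < (1 - x) ^ (n - k)) by (apply pow_lt; lra).
  assert (0 < Am n (n - k) * exp (INR n * x)) by (apply Rmult_lt_0_compat; auto).
  rewrite ln_mult, ln_mult, ln_exp, ln_pow; try lra.
Qed.

Lemma ell_incr n k x y : (0 < n)%nat -> (k <= n)%nat -> 0 <= x -> x < y -> y < 1 ->
  INR n * y <= INR k -> ln (gk n k x) < ln (gk n k y).
Proof.
  intros Hn Hk Hx Hxy Hy Hyk. rewrite !ln_gk by (auto || lra).
  assert (HN : 0 < INR n) by (apply lt_0_INR; lia).
  rewrite minus_INR by auto.
  assert (D : ln (1 - x) - ln (1 - y) < (y - x) / (1 - y)).
  { rewrite <- ln_div by lra.
    replace ((y - x) / (1 - y)) with ((1 - x) / (1 - y) - 1) by (field; lra).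
    apply ln_lt_sub1. apply Rdiv_lt_0_compat; lra.
    intro E. apply (f_equal (fun t => t * (1 - y))) in E. unfold Rdiv in E.
    rewrite Rmult_assoc, Rinv_l in E by lra. lra. }
  assert (Hm : 0 <= INR n - INR k). { rewrite <- minus_INR by auto. apply pos_INR. }
  assert (B : (INR n - INR k) * ((y - x) / (1 - y)) <= INR n * (y - x)).
  { apply (Rmult_le_reg_r (1 - y)). lra. unfold Rdiv.
    replace ((INR n - INR k) * ((y - x) * / (1 - y)) * (1 - y)) with ((INR n - INR k) * (y - x))
      by (field; lra). nra. }
  destruct (Req_dec (INR n - INR k) 0) as [E|E].
  - rewrite E. nra.
  - assert ((INR n - INR k) * (ln (1 - x) - ln (1 - y)) < (INR n - INR k) * ((y - x) / (1 - y))).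
    { apply Rmult_lt_compat_l. lra. exact D. }
    lra.
Qed.

Lemma Lambda_on n k x : (0 < n)%nat -> (1 <= k <= n)%nat -> 0 <= x < 1 ->
  INR k - 1 <= INR n * x <= INR k -> Lambda n x = ln (gk n k x).
Proof. intros. rewrite Lambda_eq, (M_interval n k) by auto. reflexivity. Qed.

Lemma Lambda_mono n : (0 < n)%nat ->
  forall p q, 0 <= p -> p < q -> q < 1 -> Lambda n p < Lambda n q.
Proof.
  intros Hn.
  assert (HN : 0 < INR n) by (apply lt_0_INR; lia).
  assert (S : forall k, (k <= n)%nat -> forall p q, 0 <= p -> p < q -> q < 1 ->
            INR n * q <= INR k -> Lambda n p < Lambda n q).
  { induction k; intros Hk p q Hp Hpq Hq Hqk.
    - simpl in Hqk. nra.
    - destruct (Rle_dec (INR n * q) (INR k)) as [Hq'|Hq'].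
      + apply IHk; auto; lia.
      + rewrite S_INR in Hqk.
        assert (Iq : INR (S k) - 1 <= INR n * q <= INR (S k)) by (rewrite S_INR; lra).
        rewrite (Lambda_on n (S k) q) by (auto || lia || lra).
        destruct (Rle_dec (INR k) (INR n * p)) as [Hp'|Hp'].
        * rewrite (Lambda_on n (S k) p) by (try rewrite S_INR; (auto || lia || nra)).
          apply ell_incr; try (auto || lra || lia).
        * set (r := INR k / INR n).
          assert (Hr : INR n * r = INR k) by (unfold r; field; lra).
          assert (0 <= r) by (unfold r; apply Rdiv_le_0_compat; [apply pos_INR|lra]).
          assert (p < r) by nra. assert (r < q) by nra.
          apply Rlt_trans with (Lambda n r).
          apply IHk; (auto || lia || lra).
          rewrite (Lambda_on n (S k) r) by (try rewrite S_INR; (auto || lia || lra)).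
          apply ell_incr; (auto || lra || lia). }
  intros p q Hp Hpq Hq. apply (S n); auto. nra.
Qed.

Lemma main_bounds n p kn : (0 < n)%nat -> 0 < p < 1 -> (1 <= kn <= n)%nat ->
  INR kn - 1 < INR n * p <= INR kn ->
  let k := INR kn in
     Lambda n p < - ln (1 - p) /\
     (k < INR n -> Lambda n p < - / 2 * ln (1 - k / INR n)) /\
     Lambda n p + ln (1 - p) / 2
       < - (k - 1) / (12 * INR n * (INR n - k + 1)) + / (8 * (INR n - k) + 6) /\
     (k < INR n ->
       Lambda n p + ln (1 - p) / 2
         > - (k - 1) / (12 * INR n * (INR n - k + 1))
           - / (12 * (INR n - k) * (INR n - k + 1))).
Proof.
  intros Hn Hp Hk Hkp k. unfold k; clear k.
  set (m := (n - kn)%nat).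
  assert (HmR : INR m = INR n - INR kn) by (unfold m; apply minus_INR; lia).
  assert (HN : 0 < INR n) by (apply lt_0_INR; lia).
  assert (HK : 1 <= INR kn) by (replace 1 with (INR 1) by reflexivity; apply le_INR; lia).
  assert (Hm0 : 0 <= INR m) by apply pos_INR.
  assert (HL : Lambda n p = ln (Am n m) + INR n * p + INR m * ln (1 - p)).
  { rewrite (Lambda_on n kn p) by (auto || lra). rewrite ln_gk by (auto || lia || lra). reflexivity. }
  set (a := ln (1 - p)).
  assert (HmA : ln (Am n m) = ln (Am n (S m)) + ln (INR m + 1) - ln (INR n)).
  { rewrite (Am_step n m) by (unfold m; lia). pose proof (Am_pos n (S m) Hn).
    assert (0 < Am n (S m) * (INR m + 1)) by (apply Rmult_lt_0_compat; lra).
    assert (0 < / INR n) by (apply Rinv_0_lt_compat; lra).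
    unfold Rdiv. rewrite ln_mult, ln_mult, ln_Rinv; try lra. }
  assert (HT1 : TT n (S m) <= 0).
  { rewrite (TT_eq n (n - S m)) by (unfold m; lia). pose proof (Ssum_nonneg (S m) (n - S m) ltac:(lia)). lra. }
  unfold TT in HT1. rewrite S_INR in HT1.
  replace (INR (n - S m)) with (INR kn - 1) in HT1 by (rewrite minus_INR by (unfold m; lia); rewrite S_INR; lra).
  split; [|split; [|split]].
  -
    set (y := (INR m + 1) / INR n).
    assert (Hy : 0 < y) by (unfold y; apply Rdiv_lt_0_compat; lra).
    assert (Hu : ln ((1 - p) / y) < (1 - p) / y - 1).
    { apply ln_lt_sub1. apply Rdiv_lt_0_compat; lra.
      intro E. assert (1 - p = y) by (apply (f_equal (fun t => t * y)) in E; unfold Rdiv in E;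
        rewrite Rmult_assoc, Rinv_l, Rmult_1_r, Rmult_1_l in E by lra; exact E).
      unfold y in H. apply (f_equal (fun t => t * INR n)) in H. unfold Rdiv in H.
      rewrite Rmult_assoc, Rinv_l in H by lra. lra. }
    rewrite ln_div in Hu by lra. unfold y in Hu. rewrite ln_div in Hu by lra.
    assert (Hu2 : (INR m + 1) * (a - (ln (INR m + 1) - ln (INR n))) <
                  INR n * (1 - p) - (INR m + 1)).
    { replace (INR n * (1 - p) - (INR m + 1)) with ((INR m + 1) * ((1 - p) / ((INR m + 1) / INR n) - 1))
        by (field; lra). apply Rmult_lt_compat_l. lra. exact Hu. }
    assert (HLn : ln (INR m + 1) - ln (INR n) <= 0).
    { assert (INR m + 1 <= INR n) by lra.
      destruct (Req_dec (INR m + 1) (INR n)) as [E|E]. rewrite E; lra.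
      pose proof (ln_increasing (INR m + 1) (INR n) ltac:(lra) ltac:(lra)). lra. }
    rewrite HL. fold a. lra.
  -
    intros Hlt.
    assert (Hm1 : (1 <= m)%nat) by (apply INR_lt in Hlt; unfold m; lia).
    assert (HM : 0 < INR m) by (apply lt_0_INR; lia).
    assert (E : 1 - INR kn / INR n = INR m / INR n) by (rewrite HmR; field; lra).
    rewrite E, ln_div by lra.
    assert (Hu : ln ((1 - p) * INR n / INR m) <= (1 - p) * INR n / INR m - 1).
    { apply ln_le_sub1. apply Rdiv_lt_0_compat; try lra; apply Rmult_lt_0_compat; lra. }
    rewrite ln_div, ln_mult in Hu by (try apply Rmult_lt_0_compat; lra).
    assert (Hu2 : INR m * (a + ln (INR n) - ln (INR m)) <= INR n * (1 - p) - INR m).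
    { replace (INR n * (1 - p) - INR m) with (INR m * ((1 - p) * INR n / INR m - 1)) by (field; lra).
      apply Rmult_le_compat_l. lra. exact Hu. }
    assert (HT : TT n m < 0).
    { rewrite (TT_eq n kn) by (unfold m; lia).
      destruct kn. lia. simpl Ssum. pose proof (dd_pos m ltac:(lia)).
      pose proof (Ssum_nonneg (S m) kn ltac:(lia)). lra. }
    unfold TT in HT. replace (INR (n - m)) with (INR kn) in HT by (rewrite minus_INR by (unfold m; lia); lra).
    rewrite HL. fold a. lra.
  -
    assert (Hu : ln ((1 - p) * INR n / (INR m + /2)) <= (1 - p) * INR n / (INR m + /2) - 1).
    { apply ln_le_sub1. apply Rdiv_lt_0_compat; try lra; apply Rmult_lt_0_compat; lra. }
    rewrite ln_div, ln_mult in Hu by (try apply Rmult_lt_0_compat; lra).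
    assert (Hu2 : (INR m + /2) * (a + ln (INR n) - ln (INR m + /2)) <= INR n * (1 - p) - (INR m + /2)).
    { replace (INR n * (1 - p) - (INR m + /2)) with ((INR m + /2) * ((1 - p) * INR n / (INR m + /2) - 1)) by (field; lra).
      apply Rmult_le_compat_l. lra. exact Hu. }
    rewrite <- HmR.
    replace (INR kn) with (INR n - INR m) by lra.
    destruct (Nat.eq_dec m 0) as [Hm0'|Hm0'].
    +
      rewrite Hm0' in HL, HmA, Hu2, HT1. simpl INR in *. rewrite Rplus_0_l, ln_1 in HmA.
      rewrite Rplus_0_l in Hu2. rewrite ln_Rinv in Hu2 by lra.
      pose proof (Ssum_lower 1 (n - 1) ltac:(lia)).
      replace (1 + (n - 1))%nat with n in H by lia.
      pose proof (TT_eq n (n - 1) 1 ltac:(lia) ltac:(lia)) as HT. unfold TT in HT. simpl INR in HT.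
      rewrite ln_1 in HT.
      replace (INR (n - 1)) with (INR n - 1) in HT by (rewrite minus_INR by lia; simpl; lra).
      pose proof ln2_bound.
      assert (0 < / (320 * (INR n * (INR n * (INR n * 1))))) by (apply Rinv_0_lt_compat; apply Rmult_lt_0_compat; [lra|repeat apply Rmult_lt_0_compat; lra]).
      assert (E1 : - (INR n - 0 - 1) / (12 * INR n * (INR n - (INR n - 0) + 1))
                 = - / 12 + / (12 * INR n)) by (field; lra).
      assert (E2 : 8 * (INR n - (INR n - 0)) + 6 = 6) by ring.
      rewrite Hm0'. simpl INR.
      replace (- (INR n - 0 - 1) / (12 * INR n * (0 + 1)) + / (8 * 0 + 6)) with (- / 12 + / (12 * INR n) + / 6) by (field; lra).
      rewrite HL. fold a. simpl in H.
      replace (/ (12 * 1)) with (/12) in H by field.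
      replace (/ (320 * (1 * (1 * (1 * 1))))) with (/320) in H by field.
      lra.
    +
      assert (HM : 0 < INR m) by (apply lt_0_INR; lia).
      assert (HT : TT n m = - (dd m + Ssum (S m) (kn - 1))).
      { rewrite (TT_eq n kn) by (unfold m; lia). destruct kn. lia. simpl Ssum.
        rewrite Nat.sub_0_r. reflexivity. }
      unfold TT in HT. replace (INR (n - m)) with (INR kn) in HT by (rewrite minus_INR by (unfold m; lia); lra).
      pose proof (Ssum_lower (S m) (kn - 1) ltac:(lia)) as HS.
      replace (S m + (kn - 1))%nat with n in HS by (unfold m; lia).
      rewrite S_INR in HS.
      assert (0 < / (320 * INR n ^ 3)) by (apply Rinv_0_lt_compat; apply Rmult_lt_0_compat; [lra|apply pow_lt; lra]).
      set (y := / (2 * INR m + 1)).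
      pose proof (L2 y ltac:(unfold y; left; apply Rinv_0_lt_compat; lra)) as HL2.
      replace (ln (1 + y)) with (ln (INR m + 1) - ln (INR m + /2)) in HL2.
      2: { rewrite <- ln_div by lra. f_equal. unfold y. field. lra. }
      pose proof (R2 (INR m) ltac:(replace 1 with (INR 1) by reflexivity; apply le_INR; lia)) as HR2.
      fold y in HR2.
      assert (HP : (INR m + /2) * (y - y^2/2 + y^3/3 - y^4/4) <= (INR m + /2) * (ln (INR m + 1) - ln (INR m + /2))).
      { apply Rmult_le_compat_l. lra. exact HL2. }
      unfold dd in HT.
      assert (E1 : - (INR n - INR m - 1) / (12 * INR n * (INR n - (INR n - INR m) + 1))
                 = - / (12 * (INR m + 1)) + / (12 * INR n)) by (field; lra).
      replace (- (INR n - INR m - 1) / (12 * INR n * (INR m + 1)) + / (8 * INR m + 6))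
        with (- / (12 * (INR m + 1)) + / (12 * INR n) + / (8 * INR m + 6)) by (field; lra).
      rewrite HL. fold a.
      lra.
  -
    intros Hlt.
    assert (Hm1 : (1 <= m)%nat) by (apply INR_lt in Hlt; unfold m; lia).
    assert (HM : 0 < INR m) by (apply lt_0_INR; lia).
    set (w := (1 - p) * INR n / INR m).
    assert (Hw1 : 1 <= w).
    { unfold w. apply (Rmult_le_reg_r (INR m)). lra. unfold Rdiv.
      rewrite Rmult_assoc, Rinv_l, Rmult_1_r by lra. lra. }
    set (z := (w - 1) / (w + 1)).
    assert (Hz : 0 <= z < 1).
    { unfold z. split. apply Rdiv_le_0_compat; lra.
      apply (Rmult_lt_reg_r (w + 1)). lra. unfold Rdiv. rewrite Rmult_assoc, Rinv_l by lra. lra. }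
    pose proof (L1 z Hz) as HL1.
    replace (ln (1 + z) - ln (1 - z)) with (ln w) in HL1.
    2: { rewrite <- ln_div by lra.
         f_equal. unfold z. field. lra. }
    assert (Hz3 : 0 <= 2 * z ^ 3 / 3 + 2 * z ^ 5 / 5).
    { pose proof (pow_le z 3 (proj1 Hz)). pose proof (pow_le z 5 (proj1 Hz)). lra. }
    assert (Hkey : INR kn - INR n * p <= (INR m + /2) * (2 * z)).
    { unfold z, w.
      replace ((INR m + / 2) * (2 * (((1 - p) * INR n / INR m - 1) / ((1 - p) * INR n / INR m + 1))))
        with ((2 * INR m + 1) * ((INR kn - INR n * p) / (2 * INR m + (INR kn - INR n * p)))).
      2: { replace (INR kn) with (INR n - INR m) by lra. field. repeat split; try lra. }
      assert (0 <= INR kn - INR n * p) by lra.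
      apply (Rmult_le_reg_r (2 * INR m + (INR kn - INR n * p))). lra.
      unfold Rdiv. rewrite Rmult_assoc, Rmult_assoc, Rinv_l, Rmult_1_r by lra.
      nra. }
    unfold w in HL1. rewrite ln_div, ln_mult in HL1 by (try apply Rmult_lt_0_compat; lra).
    assert (HP : (INR m + /2) * (2 * z) <= (INR m + /2) * (a + ln (INR n) - ln (INR m))).
    { apply Rmult_le_compat_l. lra. fold a in HL1. lra. }
    assert (HT : TT n m = - Ssum m kn) by (apply TT_eq; unfold m; lia).
    pose proof (Ssum_upper m kn ltac:(lia) ltac:(lia)) as HS.
    replace (m + kn)%nat with n in HS by (unfold m; lia).
    unfold TT in HT. replace (INR (n - m)) with (INR kn) in HT by (rewrite minus_INR by (unfold m; lia); lra).
    assert (E : - (INR kn - 1) / (12 * INR n * (INR n - INR kn + 1)) - / (12 * (INR n - INR kn) * (INR n - INR kn + 1))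
              = - (/ (12 * INR m) - / (12 * INR n))).
    { rewrite <- HmR. replace (INR kn) with (INR n - INR m) by lra. field. lra. }
    unfold Rgt. rewrite E. rewrite HL. fold a. lra.
Qed.

Theorem theorem3 (n : nat) (Hn : (1 <= n)%nat) :
  (forall p, 0 <= p < 1 ->
     exists r : R, rho_bin_poiss n p = Finite r /\ 0 < r) /\
  (forall p, 0 <= p < 1 ->
     filterlim (Lambda n) (within (fun x => 0 <= x < 1) (locally p))
               (locally (Lambda n p))) /\
  (forall p q, 0 <= p -> p < q -> q < 1 -> Lambda n p < Lambda n q) /\
  Lambda n 0 = 0 /\
  (forall p, 0 < p < 1 ->
     let k := IZR (ceilR (INR n * p)) in
     Lambda n p < - ln (1 - p) /\
     (k < INR n -> Lambda n p < - / 2 * ln (1 - k / INR n)) /\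
     Lambda n p + ln (1 - p) / 2
       < - (k - 1) / (12 * INR n * (INR n - k + 1)) + / (8 * (INR n - k) + 6) /\
     (k < INR n ->
       Lambda n p + ln (1 - p) / 2
         > - (k - 1) / (12 * INR n * (INR n - k + 1))
           - / (12 * (INR n - k) * (INR n - k + 1)))).
Proof.
  assert (Hn0 : (0 < n)%nat) by lia.
  assert (HN : 0 < INR n) by (apply lt_0_INR; lia).
  split; [|split; [|split; [|split]]].
  - intros p Hp. exists (M n p). split. apply rho_eq; auto. apply M_pos; auto; lra.
  - intros p Hp. rewrite (Lambda_eq n p) by auto.
    apply (filterlim_ext_loc (fun x => ln (M n x))).
    + unfold within. apply filter_forall. intros x Hx. symmetry. apply Lambda_eq; auto.
    + apply (filterlim_filter_le_1 (F := locally p)). apply filter_le_within.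
      apply (continuous_comp (M n) ln). apply Mx_cont. apply continuous_ln. apply M_pos; auto; lra.
  - apply Lambda_mono; auto.
  - rewrite (Lambda_on n 1 0) by (simpl; try lia; lra).
    rewrite (gk_step n 0 0) by (lia || lra). unfold gk.
    rewrite Nat.sub_0_r, Rmult_0_r, exp_0, Rminus_0_r, pow1. simpl pow.
    replace (INR (fact n) / (INR (fact n) * 1) * 1 * 1 * INR n / (INR n * 1)) with 1.
    apply ln_1. field. split. apply INR_fact_neq_0. lra.
  - intros p Hp k.
    set (z := ceilR (INR n * p)) in k.
    assert (Hz : INR n * p <= IZR z < INR n * p + 1).
    { unfold z, ceilR. rewrite opp_IZR. pose proof (base_Int_part (- (INR n * p))). lra. }
    assert (Hnp : 0 < INR n * p) by (apply Rmult_lt_0_compat; lra).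
    assert (Hz0 : (0 <= z)%Z) by (apply le_IZR; lra).
    set (kn := Z.to_nat z).
    assert (Hkn : INR kn = IZR z) by (unfold kn; rewrite INR_IZR_INZ, Z2Nat.id; auto).
    assert (H1 : (1 <= kn)%nat).
    { destruct kn eqn:E. simpl in Hkn. lra. lia. }
    assert (H2 : (kn <= n)%nat).
    { assert (INR kn < INR (S n)) by (rewrite S_INR; nra). apply INR_lt in H. lia. }
    unfold k. rewrite <- Hkn.
    apply main_bounds; auto. lra.
Qed.
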